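(* Fix one of the following settings, with $\phi,\sigma$ commuting $\mathbb{C}$-linear automorphisms of $K$: (2S) $K=\mathbb{C}(x)$, $\phi(x)=x+h_1$, $\sigma(x)=x+h_2$, $h_1/h_2\notin\mathbb{Q}$; (2Q) $K=\bigcup_{j\ge1}\mathbb{C}(x^{1/j})$, $\phi(x)=q_1x$, $\sigma(x)=q_2x$, with $q_1,q_2\in\mathbb{C}^*$ multiplicatively independent and not both algebraic numbers of modulus one all of whose Galois conjugates have modulus one; (2M) $K=\bigcup_{j\ge1}\mathbb{C}(x^{1/j})$, $\phi(x)=x^{p_1}$, $\sigma(x)=x^{p_2}$, $p_1,p_2$ multiplicatively independent natural numbers. Let $\tilde a\in K^*$, $\tilde b\in K$, and assume that there exists a $\sigma$-Picard–Vessiot extension $L_A$ over $K$ for $\phi(Y)=AY$ with $A=\begin{pmatrix}\tilde a&\tilde b\\0&1\end{pmatrix}$ which is a field. Let $L$ be a field with $K\subset L\subset L_A$ and $\phi(L)\subset L$, and let $x\in L_A^*$ be such that $\phi(x)/x=\alpha\in L^*$. If the equation $\phi(y)=\tilde ay+\tilde b$ has a solution in $L(x)$, then it has a solution in $L$.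
   Context: For $A\in\mathrm{GL}_n(K)$, a $\sigma$-Picard–Vessiot extension for $\phi(Y)=AY$ over $K$ which is a field is a field extension $L_A$ of $K$ with commuting endomorphisms $\phi,\sigma$ extending those of $K$ such that there is $U\in\mathrm{GL}_n(L_A)$ with $\phi(U)=AU$, $L_A$ is generated as a field over $K$ by the entries of $\sigma^i(U)$, $i\ge0$, and $L_A^\phi=K^\phi=\mathbb{C}$. *)

(* Defs.v *)
From HB Require Import structures.
From mathcomp Require Import all_boot all_order all_algebra.
From mathcomp Require Import complex fraction.
From mathcomp Require Import reals.
Set Implicit Arguments. Unset Strict Implicit. Unset Printing Implicit Defensive.
Import Order.TTheory GRing.Theory Num.Theory.
Local Open Scope ring_scope.

(* The complex numbers are modelled as R[i] for R : realType (a complete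
   archimedean ordered field, i.e. the real line). *)
Notation RatFun C := {fraction {poly C}}.

Section Defs.
Variable R : realType.
Local Notation C := (R[i]).
Variable LA : fieldType.

Definition is_subfield (P : LA -> Prop) : Prop :=
  [/\ P 0, P 1,
      forall u v, P u -> P v -> P (u - v),
      forall u v, P u -> P v -> P (u * v)
    & forall u, P u -> P u^-1].

Definition in_gen_field (S : LA -> Prop) (y : LA) : Prop :=
  forall P : LA -> Prop, is_subfield P -> (forall z, S z -> P z) -> P y.

Definition matA (a b : LA) : 'M[LA]_2 :=
  \matrix_(i < 2, j < 2)
     (if ((i : nat) == 0%N) && ((j : nat) == 0%N) then a
      else if ((i : nat) == 0%N) && ((j : nat) == 1%N) then b
      else if ((i : nat) == 1%N) && ((j : nat) == 1%N) then 1
      else 0).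

Definition fracX : RatFun C := tofrac 'X.
Definition fracC (c : C) : RatFun C := tofrac c%:P.

(* q is an algebraic number all of whose Galois conjugates (roots of its
   minimal polynomial over Q, i.e. of an irreducible rational polynomial
   vanishing at q) have modulus one (this includes q itself). *)
Definition alg_conj_unimodular (q : C) : Prop :=
  exists P : {poly rat}, [/\ irreducible_poly P, root (map_poly ratr P) q
    & forall z : C, root (map_poly ratr P) z -> `|z| = 1].

(* Setting (2S).  K = C(x) embedded in LA via iota; iotaC embeds C. *)
Definition setting2S (iotaC : {rmorphism C -> LA}) (K : LA -> Prop)
  (phi sigma : {rmorphism LA -> LA}) : Prop :=
  exists (iota : {rmorphism RatFun C -> LA}) (h1 h2 : C),
  [/\ forall c, iota (fracC c) = iotaC c,
      forall y, K y <-> exists f, y = iota f,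
      phi (iota fracX) = iota fracX + iotaC h1,
      sigma (iota fracX) = iota fracX + iotaC h2
    & h2 != 0 /\ ~ (exists r : rat, h1 / h2 = ratr r)].

(* Settings (2Q), (2M).  K = \bigcup_{j>=1} C(x^{1/j}); iota j is the
   embedding of C(X) sending X to x^{1/j}, compatible: (x^{1/jk})^k = x^{1/j}. *)
Definition puiseux_embedding (iotaC : {rmorphism C -> LA}) (K : LA -> Prop)
  (iota : nat -> {rmorphism RatFun C -> LA}) : Prop :=
  [/\ forall j c, (0 < j)%N -> iota j (fracC c) = iotaC c,
      forall j k, (0 < j)%N -> (0 < k)%N ->
        (iota (j * k)%N fracX) ^+ k = iota j fracX
    & forall y, K y <-> exists j f, (0 < j)%N /\ y = iota j f].

Definition setting2Q (iotaC : {rmorphism C -> LA}) (K : LA -> Prop)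
  (phi sigma : {rmorphism LA -> LA}) : Prop :=
  exists (iota : nat -> {rmorphism RatFun C -> LA}) (q1 q2 : C)
         (r1 r2 : nat -> C),
  [/\ puiseux_embedding iotaC K iota,
      (* r1 j = q1^{1/j}, r2 j = q2^{1/j}, compatible choices of roots *)
      r1 1%N = q1 /\ r2 1%N = q2,
      forall j k, (0 < j)%N -> (0 < k)%N ->
        r1 (j * k)%N ^+ k = r1 j /\ r2 (j * k)%N ^+ k = r2 j,
      forall j, (0 < j)%N ->
        phi (iota j fracX) = iotaC (r1 j) * iota j fracX /\
        sigma (iota j fracX) = iotaC (r2 j) * iota j fracX
    & [/\ q1 != 0, q2 != 0,
          forall m n : int, q1 ^ m * q2 ^ n = 1 -> m = 0 /\ n = 0
        & ~ (alg_conj_unimodular q1 /\ alg_conj_unimodular q2)]].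

Definition setting2M (iotaC : {rmorphism C -> LA}) (K : LA -> Prop)
  (phi sigma : {rmorphism LA -> LA}) : Prop :=
  exists (iota : nat -> {rmorphism RatFun C -> LA}) (p1 p2 : nat),
  [/\ puiseux_embedding iotaC K iota,
      forall j, (0 < j)%N ->
        phi (iota j fracX) = iota j fracX ^+ p1 /\
        sigma (iota j fracX) = iota j fracX ^+ p2
    & [/\ (0 < p1)%N, (0 < p2)%N
        & forall m n : int, (p1%:Q) ^ m * (p2%:Q) ^ n = 1 -> m = 0 /\ n = 0]].

Definition base_setting (iotaC : {rmorphism C -> LA}) (K : LA -> Prop)
  (phi sigma : {rmorphism LA -> LA}) : Prop :=
  [/\ forall c, phi (iotaC c) = iotaC c,
      forall c, sigma (iotaC c) = iotaC c,
      forall y, phi (sigma y) = sigma (phi y)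
    & setting2S iotaC K phi sigma \/ setting2Q iotaC K phi sigma
      \/ setting2M iotaC K phi sigma].

Definition sigmaPV (iotaC : {rmorphism C -> LA}) (K : LA -> Prop)
  (phi sigma : {rmorphism LA -> LA}) (A : 'M[LA]_2) : Prop :=
  exists U : 'M[LA]_2,
  [/\ U \in unitmx,
      map_mx phi U = A *m U,
      forall y, in_gen_field
                  (fun z => K z \/ exists i r s, z = iter i sigma (U r s)) y
    & forall y, phi y = y <-> exists c, y = iotaC c].

End Defs.

(* Main.v *)
Require Import Defs.
From HB Require Import structures.
From mathcomp Require Import all_boot all_order all_algebra.
From mathcomp Require Import complex fraction.
From mathcomp Require Import reals.
From mathcomp Require Import boolp.
From mathcomp Require Import ring zify.
From Stdlib Require Import Classical.
Import Order.TTheory GRing.Theory Num.Theory.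
Local Open Scope ring_scope.

Section Core.
Variables (F : fieldType) (S : divringClosed F).
Inductive SubB := mkB x & x \in S.
Definition vB u := let: mkB x _ := u in x.
HB.instance Definition _ := [isSub for vB].
HB.instance Definition _ := [Choice of SubB by <:].
HB.instance Definition _ := [SubChoice_isSubIntegralDomain of SubB by <:].
HB.instance Definition _ := [SubIntegralDomain_isSubField of SubB by <:].

Lemma vB0 : vB 0 = 0. Proof. exact: (rmorph0 val). Qed.
Lemma vB1 : vB 1 = 1. Proof. exact: (rmorph1 val). Qed.
Lemma vBM u v : vB (u * v) = vB u * vB v. Proof. exact: (rmorphM val). Qed.
Lemma vBX u n : vB (u ^+ n) = vB u ^+ n. Proof. exact: (rmorphXn val). Qed.
Lemma vBD u v : vB (u + v) = vB u + vB v. Proof. exact: (rmorphD val). Qed.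
Lemma vBB u v : vB (u - v) = vB u - vB v. Proof. exact: (rmorphB val). Qed.
Lemma vB_eq0 u : (vB u == 0) = (u == 0).
Proof. by rewrite -vB0 (inj_eq val_inj). Qed.
Lemma vBP u : vB u \in S. Proof. exact: (valP u). Qed.
Variable x : F.
Definition evx (p : {poly SubB}) := (map_poly val p).[x].
Lemma evD p q : evx (p + q) = evx p + evx q. Proof. by rewrite /evx rmorphD hornerD. Qed.
Lemma evB p q : evx (p - q) = evx p - evx q. Proof. by rewrite /evx rmorphB hornerD hornerN. Qed.
Lemma evM p q : evx (p * q) = evx p * evx q. Proof. by rewrite /evx rmorphM hornerM. Qed.
Lemma evC c : evx c%:P = vB c. Proof. by rewrite /evx map_polyC hornerC. Qed.
Lemma evX : evx 'X = x. Proof. by rewrite /evx map_polyX hornerX. Qed.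
Lemma evZ c p : evx (c *: p) = vB c * evx p. Proof. by rewrite -mul_polyC evM evC. Qed.

Definition Gen (z : F) := exists P Q, evx Q != 0 /\ z = evx P / evx Q.
End Core.
Section Tw.
Variables (F : fieldType) (S : divringClosed F).
Variables (phi : {rmorphism F -> F}) (phiS : forall z, z \in S -> phi z \in S).
Variables (x : F) (x0 : x != 0) (alS : phi x / x \in S).
Local Notation B := (@SubB F S).
Local Notation ev := (@evx F S x).
Definition phiB (u : B) : B := Sub (phi (val u)) (phiS (val u) (valP u)).
Lemma val_phiB u : vB F S (phiB u) = phi (vB F S u). Proof. by rewrite /phiB SubK. Qed.
Definition alB : B := Sub (phi x / x) alS.
Lemma val_alB : vB F S alB = phi x / x. Proof. by rewrite /alB SubK. Qed.
Definition tw (p : {poly B}) : {poly B} := \poly_(i < size p) (phiB p`_i * alB ^+ i).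
Lemma phiB_eq0 u : (phiB u == 0) = (u == 0).
Proof. by rewrite -vB_eq0 val_phiB fmorph_eq0 vB_eq0. Qed.
Lemma phiB0 : phiB 0 = 0. Proof. by apply/eqP; rewrite phiB_eq0. Qed.
Lemma coef_tw p i : (tw p)`_i = phiB p`_i * alB ^+ i.
Proof.
rewrite /tw coef_poly; case: ltnP => // h.
by rewrite nth_default // phiB0 mul0r.
Qed.
Lemma ev_tw p : ev (tw p) = phi (ev p).
Proof.
rewrite /ev (horner_coef_wide _ (n := size p)); last first.
  by rewrite size_map_poly size_poly.
rewrite (horner_coef_wide _ (n := size p)); last by rewrite size_map_poly.
rewrite rmorph_sum; apply: eq_bigr => i _.
rewrite !coef_map coef_tw.
have vM : forall u v : B, vB F S (u * v) = vB F S u * vB F S v by move=> u v; exact: (rmorphM val).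
have vX : forall (u : B) n, vB F S (u ^+ n) = vB F S u ^+ n by move=> u n; exact: (rmorphXn val).
change (vB F S (phiB p`_i * alB ^+ i) * x ^+ i = phi (vB F S p`_i * x ^+ i)).
rewrite vM vX val_phiB val_alB rmorphM rmorphXn.
by rewrite -mulrA -exprMn divfK.
Qed.
Lemma size_tw p : size (tw p) = size p.
Proof.
have [->|p0] := eqVneq p 0; first by rewrite /tw size_poly0 poly_def big_ord0 size_poly0.
apply: size_poly_eq.
rewrite mulf_neq0 //.
  by rewrite phiB_eq0 lead_coef_eq0.
rewrite expf_neq0 // -vB_eq0 val_alB.
by rewrite mulf_eq0 invr_eq0 (negPf x0) orbF fmorph_eq0 (negPf x0).
Qed.
End Tw.
Section Core2.
Variables (F : fieldType) (S : divringClosed F).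
Variables (phi : {rmorphism F -> F}) (phiS : forall z, z \in S -> phi z \in S).
Variables (x : F) (x0 : x != 0) (alS : phi x / x \in S).
Variables (a b : F) (aS : a \in S) (bS : b \in S).
Local Notation B := (@SubB F S).
Local Notation ev := (@evx F S x).
Local Notation tw := (@tw F S phi phiS x alS).
Definition aB : B := Sub a aS.
Definition bB : B := Sub b bS.
Lemma vaB : vB F S aB = a. Proof. by rewrite /aB /vB. Qed.
Lemma vbB : vB F S bB = b. Proof. by rewrite /bB /vB. Qed.
Definition EqP (p : {poly B}) := tw p - aB *: p - bB%:P.
Lemma ev0 : ev 0 = 0. Proof. by rewrite /ev rmorph0 horner0. Qed.
Lemma ev1 : ev 1 = 1. Proof. by rewrite /ev rmorph1 hornerC. Qed.
Lemma ev_Eq p : ev (EqP p) = phi (ev p) - a * ev p - b.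
Proof. by rewrite /EqP !evB evZ evC ev_tw // -/aB vaB -/bB vbB. Qed.
Lemma Eq_sol p : EqP p = 0 -> exists y0, y0 \in S /\ phi y0 = a * y0 + b.
Proof.
move=> h; have := congr1 (fun q : {poly B} => q`_0) h; rewrite /EqP !coefB coefZ coefC coef_tw coef0 /= expr0 mulr1.
move=> h1; have := congr1 (vB F S) h1; rewrite !vBB vBM val_phiB vaB vbB vB0 => /eqP.
rewrite !subr_eq0 => /eqP h2; exists (vB F S p`_0); split; first exact: vBP.
by rewrite -h2 addrC subrK.
Qed.

Lemma trans_case P Q : (forall p, ev p = 0 -> p = 0) -> ev Q != 0 ->
  phi (ev P / ev Q) = a * (ev P / ev Q) + b ->
  exists y0, y0 \in S /\ phi y0 = a * y0 + b.
Proof.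
move=> tr eQ heq.
have Q0 : Q != 0 by apply: contraNneq eQ => ->; rewrite ev0.
set Sq := P %/ Q; set r := P %% Q.
have hP : ev P = ev Sq * ev Q + ev r by rewrite {1}(divp_eq P Q) evD evM.
have etQ : ev (tw Q) != 0 by rewrite ev_tw // fmorph_eq0.
have twQ0 : tw Q != 0 by apply: contraNneq etQ => ->; rewrite ev0.
apply: (@Eq_sol Sq).
have key : EqP Sq * Q * tw Q = aB *: r * tw Q - tw r * Q.
  apply/eqP; rewrite -subr_eq0; apply/eqP; apply: tr.
  rewrite !evB !evM evZ ev_Eq -/aB vaB !ev_tw //.
  move: heq etQ; rewrite hP fmorph_div rmorphD rmorphM ev_tw //.
  move=> heq etQ.
  have h2 : phi (ev Sq) = a * ((ev Sq * ev Q + ev r) / ev Q) + b - phi (ev r) / phi (ev Q).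
    rewrite -heq; move: (phi (ev Sq)) (phi (ev Q)) (phi (ev r)) etQ => A1 A2 A3 hA; by field.
  rewrite h2; move: (ev Q) (phi (ev Q)) (phi (ev r)) (ev r) (ev Sq) eQ etQ => A1 A2 A3 A4 A5 hh1 hh2; field; by rewrite hh1 hh2.
apply/eqP; apply: contraT => E0.
have := congr1 (fun p : {poly B} => size p) key; rewrite /=; rewrite !size_mul ?mulf_neq0 //.
have h1 : (size (aB *: r * tw Q - tw r * Q)%R <= (size r + size Q).-1)%N.
  rewrite (leq_trans (size_polyD _ _)) // size_polyN geq_max; apply/andP; split.
  - rewrite (leq_trans (size_polyMleq _ _)) // size_tw //.
    by rewrite -!subn1 leq_sub2r // leq_add2r size_scale_leq.
  - by rewrite (leq_trans (size_polyMleq _ _)) // size_tw // addnC.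
have := ltn_modp P Q; rewrite Q0 -/r => hr.
move: E0 Q0; rewrite -!size_poly_gt0 size_tw // => E0 Q0' h3.
move: h1 hr; rewrite -h3 -!subn1.
set e := size (EqP Sq); set q := size Q; set rr := size r. lia.
Qed.

Lemma alg_case P Q m : m != 0 -> ev m = 0 ->
  (forall p, p != 0 -> ev p = 0 -> (size m <= size p)%N) -> ev Q != 0 ->
  phi (ev P / ev Q) = a * (ev P / ev Q) + b ->
  exists y0, y0 \in S /\ phi y0 = a * y0 + b.
Proof.
move=> m0 em mmin eQ heq.
have cop : coprimep m Q.
  rewrite /coprimep; set g := gcdp m Q.
  have g0 : g != 0 by rewrite gcdp_eq0 negb_and m0.
  rewrite eqn_leq size_poly_gt0 g0 andbT leqNgt; apply/negP => g2.
  have hm := divpK (dvdp_gcdl m Q); have hQ := divpK (dvdp_gcdr m Q).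
  have mg0 : m %/ g != 0 by apply: contraNneq m0 => h; rewrite -hm -/g h mul0r.
  have : ev (m %/ g) != 0.
    apply/eqP => h; have := mmin _ mg0 h; rewrite size_divp //.
    have : (0 < size m)%N by rewrite size_poly_gt0.
    move: g2; set q := size g; set mm := size m; rewrite -!subn1; lia.
  move=> hne; have em2 := em; rewrite -hm evM in em2; move/eqP: em2; rewrite mulf_eq0 => /orP[eg1|/eqP eg]; first by case: (negP hne eg1).
  by move: eQ; rewrite -hQ evM -/g eg mulr0 eqxx.
move/Bezout_eq1_coprimepP: cop => [u hu].
have hu2 : ev u.2 * ev Q = 1.
  by have := congr1 ev hu; rewrite evD !evM em mulr0 add0r ev1.
have hu2' : ev u.2 = (ev Q)^-1 by apply: (mulIf eQ); rewrite hu2 mulVf.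
set P0 := P * u.2.
have hy : ev P / ev Q = ev P0 by rewrite /P0 evM hu2'.
set Sr := P0 %% m.
have hS : ev P0 = ev Sr by rewrite {1}(divp_eq P0 m) evD evM em mulr0 add0r.
apply: (@Eq_sol Sr); apply/eqP; apply: contraT => E0.
have hs : (size (EqP Sr) < size m)%N.
  have hr : (size Sr < size m)%N by rewrite ltn_modp.
  have sm : (1 < size m)%N.
    rewrite ltnNge; apply/negP => /size1_polyC hm; move: em; rewrite hm evC => /eqP.
    by rewrite vB_eq0 -polyC_eq0 -hm (negPf m0).
  rewrite /EqP (leq_ltn_trans (size_polyD _ _)) // size_polyN gtn_max; apply/andP; split; last first.
    exact: leq_ltn_trans (size_polyC_leq1 _) sm.
  rewrite (leq_ltn_trans (size_polyD _ _)) // size_polyN gtn_max size_tw // hr /=.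
  exact: leq_ltn_trans (size_scale_leq _ _) hr.
have := mmin _ E0; rewrite ev_Eq -hS -hy heq .
have -> : a * (ev P / ev Q) + b - a * (ev P / ev Q) - b = 0 by ring.
by move=> /(_ erefl); rewrite leqNgt hs.
Qed.

Lemma minimal_exists : (exists m, m != 0 /\ ev m = 0) ->
  exists m, [/\ m != 0, ev m = 0 & forall p, p != 0 -> ev p = 0 -> (size m <= size p)%N].
Proof.
case=> m [m0 em].
suff: forall n (m : {poly B}), (size m <= n)%N -> m != 0 -> ev m = 0 ->
  exists m', [/\ m' != 0, ev m' = 0 & forall p, p != 0 -> ev p = 0 -> (size m' <= size p)%N].
  by move/(_ (size m) m (leqnn _) m0 em).
elim=> [|n IH] m1 hs m10 em1.
  by rewrite leqn0 size_poly_eq0 (negPf m10) in hs.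
case: (classic (exists p, [/\ p != 0, ev p = 0 & (size p < size m1)%N])) => [[p [p0 ep sp]]|H].
  by apply: (IH p) => //; rewrite -ltnS (leq_trans sp hs).
exists m1; split=> // p p0 ep; rewrite leqNgt; apply/negP => sp; by apply: H; exists p; split.
Qed.

Lemma core y : (exists P Q, ev Q != 0 /\ y = ev P / ev Q) -> phi y = a * y + b ->
  exists y0, y0 \in S /\ phi y0 = a * y0 + b.
Proof.
move=> [P [Q [eQ ->]]] heq.
case: (classic (exists m, m != 0 /\ ev m = 0)) => [H|H].
  have [m [m0 em mmin]] := minimal_exists H.
  exact: (@alg_case P Q m m0 em mmin eQ heq).
apply: (@trans_case P Q _ eQ heq) => p ep; apply/eqP; apply: contraT => p0.
by case: H; exists p.
Qed.
End Core2.

Definition Sb (LA : fieldType) (L : LA -> Prop) (H : is_subfield L) : {pred LA} :=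
  fun z => `[< L z >].
Section Final.
Variables (LA : fieldType) (L : LA -> Prop) (Lsub : is_subfield L).
Lemma SbE z : (z \in @Sb LA L Lsub) = `[< L z >]. Proof. by []. Qed.
Lemma Sb_closed : GRing.divring_closed (@Sb LA L Lsub).
Proof.
case: Lsub => L0 L1 LB LM LV; split.
- by rewrite SbE; apply/asboolP.
- move=> u v; rewrite !SbE => /asboolP hu /asboolP hv; apply/asboolP; exact: LB.
- move=> u v; rewrite !SbE => /asboolP hu /asboolP hv; apply/asboolP.
  by apply: LM => //; exact: LV.
Qed.
HB.instance Definition _ := GRing.isDivringClosed.Build LA (@Sb LA L Lsub) Sb_closed.
End Final.

Theorem lemma4p7 (R : realType) (LA : fieldType)
  (iotaC : {rmorphism R[i] -> LA}) (K : LA -> Prop)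
  (phi sigma : {rmorphism LA -> LA})
  (hset : base_setting iotaC K phi sigma)
  (a b : LA) (Ka : K a) (Kb : K b) (a0 : a != 0)
  (hPV : sigmaPV iotaC K phi sigma (matA a b))
  (L : LA -> Prop) (Lsub : is_subfield L) (KL : forall z, K z -> L z)
  (phiL : forall z, L z -> L (phi z))
  (x : LA) (x0 : x != 0) (Lalpha : L (phi x / x))
  (hsol : exists y, in_gen_field (fun z => L z \/ z = x) y /\
                    phi y = a * y + b) :
  exists y, L y /\ phi y = a * y + b.
Proof.
case: hsol => y [hy heq].
pose SS : divringClosed LA := @Sb LA L Lsub.
have phiS : forall z, z \in SS -> phi z \in SS.
  by move=> z; rewrite !SbE => /asboolP h; apply/asboolP; exact: phiL.
have alS : phi x / x \in SS by rewrite SbE; apply/asboolP.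
have aS : a \in SS by rewrite SbE; apply/asboolP; exact: KL.
have bS : b \in SS by rewrite SbE; apply/asboolP; exact: KL.
have G : exists P Q, @evx LA SS x Q != 0 /\ y = @evx LA SS x P / @evx LA SS x Q.
  apply: (hy (fun z => exists P Q, @evx LA SS x Q != 0 /\ z = @evx LA SS x P / @evx LA SS x Q)).
  - split.
    + by exists 0, 1; rewrite ev1 oner_neq0 ev0 mul0r.
    + by exists 1, 1; rewrite ev1 oner_neq0 divr1.
    + move=> u v [P1 [Q1 [e1 ->]]] [P2 [Q2 [e2 ->]]].
      exists (P1 * Q2 - P2 * Q1), (Q1 * Q2); rewrite evM mulf_neq0 //; split => //.
      rewrite evB !evM; field; by rewrite e1 e2.
    + move=> u v [P1 [Q1 [e1 ->]]] [P2 [Q2 [e2 ->]]].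
      exists (P1 * P2), (Q1 * Q2); rewrite evM mulf_neq0 //; split => //.
      rewrite !evM; field; by rewrite e1 e2.
    + move=> u [P [Q [e ->]]].
      case: (eqVneq (@evx LA SS x P) 0) => hP.
        by exists 0, 1; rewrite hP mul0r invr0 ev1 oner_neq0 ev0 mul0r.
      by exists Q, P; split => //; rewrite invf_div.
  - move=> z [Lz| ->].
    + have zS : z \in SS by rewrite SbE; apply/asboolP.
      exists (Sub z zS : @SubB LA SS)%:P, 1; rewrite ev1 oner_neq0 evC divr1; split => //.
    + by exists 'X, 1; rewrite evX ev1 oner_neq0 divr1.
have [y0 [y0S h]] := @core LA SS phi phiS x x0 alS a b aS bS y G heq.
by exists y0; split => //; move: y0S; rewrite SbE => /asboolP.
Qed.
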